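(* Let $\mathscr G=(\mathscr V,\mathscr E)$ be a finite connected graph with $N$ vertices and $M\ge0$ an integer. The uniform reshuffling model $(X_t)$ on $\mathscr C_{N,M}$ has a unique stationary distribution $\pi_X$, and $$\lim_{t\to\infty}P_\eta(X_t=\xi)=\pi_X(\xi)\quad\text{for all }\xi,\eta\in\mathscr C_{N,M},$$ where $P_\eta$ denotes the law of the process started from $X_0=\eta$.
   Context: $\mathscr C_{N,M}$ is the set of maps $\xi:\mathscr V\to\mathbb N$ with $\sum_x\xi(x)=M$. The uniform reshuffling model is the discrete-time Markov chain on $\mathscr C_{N,M}$: at each step an edge $(x,y)\in\mathscr E$ is chosen uniformly at random, $U$ is drawn uniformly from $\{0,1,\dots,X_t(x)+X_t(y)\}$, and $X_{t+1}(x)=U$, $X_{t+1}(y)=X_t(x)+X_t(y)-U$, $X_{t+1}(z)=X_t(z)$ for $z\notin\{x,y\}$. *)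

(* Defs.v *)
From HB Require Import structures.
From mathcomp Require Import all_boot all_order all_algebra.
From mathcomp Require Import all_classical all_reals all_analysis.
Set Implicit Arguments. Unset Strict Implicit. Unset Printing Implicit Defensive.
Import Order.TTheory GRing.Theory Num.Theory.
Local Open Scope ring_scope.

(* C_{N,M}: configurations xi : V -> nat with total mass M.  Each value is
   at most M, so we store it in 'I_M.+1 to get a finite type. *)
Definition config (V : finType) (M : nat) :=
  {f : {ffun V -> 'I_M.+1} | (\sum_(x : V) (f x : nat))%N == M}.

Definition cval (V : finType) (M : nat) (xi : config V M) (v : V) : nat :=
  nat_of_ord (sval xi v).

Definition simple_graph (V : finType) (e : rel V) : Prop :=
  symmetric e /\ irreflexive e.
Definition connected_graph (V : finType) (e : rel V) : Prop :=
  forall x y : V, connect e x y.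

Definition edges (V : finType) (e : rel V) : {set V * V} :=
  [set p | e p.1 p.2].

Definition upd (V : finType) (f : V -> nat) (x y : V) (u : nat) : V -> nat :=
  fun z => if z == x then u else if z == y then (f x + f y - u)%N else f z.

Definition reshuffle_kernel (R : realType) (V : finType) (e : rel V) (M : nat)
  (xi xi' : config V M) : R :=
  (#|edges e|%:R)^-1 *
  \sum_(p in edges e)
    \sum_(0 <= u < (cval xi p.1 + cval xi p.2).+1)
      ((cval xi p.1 + cval xi p.2).+1%:R)^-1 *
      (if [forall v, cval xi' v == upd (cval xi) p.1 p.2 u v] then 1 else 0).

Fixpoint law_at (R : realType) (V : finType) (e : rel V) (M : nat)
  (t : nat) (eta xi : config V M) : R :=
  match t with
  | 0 => if eta == xi then 1 else 0
  | t'.+1 => \sum_(zeta : config V M)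
               law_at R e t' eta zeta * reshuffle_kernel R e zeta xi
  end.

Definition is_stationary (R : realType) (V : finType) (e : rel V) (M : nat)
  (pi : config V M -> R) : Prop :=
  (forall xi, 0 <= pi xi) /\ \sum_(xi : config V M) pi xi = 1 /\
  (forall xi', \sum_(xi : config V M) pi xi * reshuffle_kernel R e xi xi' = pi xi').

(* Main.v *)
Require Import Defs.
From HB Require Import structures.
From mathcomp Require Import all_boot all_order all_algebra.
From mathcomp Require Import all_classical all_reals all_analysis.
From mathcomp Require Import ring lra zify.
Import Order.TTheory GRing.Theory Num.Theory.
Import numFieldNormedType.Exports.
Local Open Scope classical_set_scope.
Local Open Scope ring_scope.

Lemma unif_nat (U : finType) (P : U -> nat -> Prop) :
  (forall u k j, P u k -> P u (k + j)%N) -> (forall u, exists k, P u k) ->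
  exists n, forall u, P u n.
Proof.
move=> Pm Pe.
suff [n Hn] : exists n, forall u, u \in enum U -> P u n.
  by exists n => u; apply: Hn; rewrite mem_enum.
elim: (enum U) => [|u s [n IH]]; first by exists 0%N.
have [k Hk] := Pe u; exists (n + k)%N => u'; rewrite in_cons => /orP [/eqP->|/IH].
  by rewrite addnC; apply: Pm.
by apply: Pm.
Qed.

Lemma unif_pos (R : realType) (U : finType) (P : U -> R -> Prop) :
  (forall u c c', 0 < c' -> c' <= c -> P u c -> P u c') ->
  (forall u, exists2 c, 0 < c & P u c) ->
  exists2 c, 0 < c & forall u, P u c.
Proof.
move=> Pm Pe.
suff [c c0 Hc] : exists2 c, 0 < c & forall u, u \in enum U -> P u c.
  by exists c => // u; apply: Hc; rewrite mem_enum.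
elim: (enum U) => [|u s [c c0 IH]]; first by exists 1.
have [k k0 Hk] := Pe u; exists (Order.min c k); first by rewrite lt_min c0 k0.
move=> u'; rewrite in_cons => /orP [/eqP->|/IH].
  by apply: Pm Hk; rewrite ?lt_min ?c0 ?k0 // ge_min lexx orbT.
by apply: Pm; rewrite ?lt_min ?c0 ?k0 // ge_min lexx.
Qed.

Section Gen.
Variables (R : realType) (T : finType) (K : T -> T -> R).
Hypothesis K0 : forall a b, 0 <= K a b.
Hypothesis Ksym : forall a b, K a b = K b a.
Hypothesis K1 : forall a, \sum_b K a b = 1.

Definition Aop (f : T -> R) : T -> R := fun a => \sum_b K a b * f b.

Lemma A_ge0 f : (forall x, 0 <= f x) -> forall x, 0 <= Aop f x.
Proof. by move=> f0 x; apply: sumr_ge0 => b _; apply: mulr_ge0. Qed.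

Lemma iterA_ge0 k f : (forall x, 0 <= f x) -> forall x, 0 <= iter k Aop f x.
Proof. by elim: k => [//|k IH] f0 x; rewrite iterS; apply: A_ge0; apply: IH. Qed.

Lemma A_aff f (c d : R) : Aop (fun x => c + d * f x) = fun x => c + d * Aop f x.
Proof.
apply: funext => a; rewrite /Aop.
under eq_bigr do rewrite mulrDr mulrCA.
by rewrite big_split /= -mulr_suml K1 mul1r -mulr_sumr.
Qed.

Lemma iterA_aff k f (c d : R) :
  iter k Aop (fun x => c + d * f x) = fun x => c + d * iter k Aop f x.
Proof. by elim: k => [//|k IH]; rewrite !iterS IH A_aff. Qed.

Lemma A_bounds f lo hi : (forall x, lo <= f x <= hi) -> forall x, lo <= Aop f x <= hi.
Proof.
move=> fb a; rewrite /Aop.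
have -> : lo = \sum_b K a b * lo by rewrite -mulr_suml K1 mul1r.
have -> : hi = \sum_b K a b * hi by rewrite -mulr_suml K1 mul1r.
apply/andP; split; apply: ler_sum => b _; apply: ler_wpM2l => //;
  by case/andP: (fb b).
Qed.

Lemma iterA_bounds k f lo hi : (forall x, lo <= f x <= hi) ->
  forall x, lo <= iter k Aop f x <= hi.
Proof. by elim: k => [//|k IH] fb; rewrite iterS; apply: A_bounds; apply: IH. Qed.

Lemma sum_A f : \sum_a Aop f a = \sum_a f a.
Proof.
rewrite /Aop exchange_big /=; apply: eq_bigr => b _.
by rewrite -mulr_suml (eq_bigr (fun a => K b a)) ?K1 ?mul1r // => a _; rewrite Ksym.
Qed.

Lemma sum_iterA k f : \sum_a iter k Aop f a = \sum_a f a.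
Proof. by elim: k => [//|k IH]; rewrite iterS sum_A IH. Qed.

Definition RK k a b := exists2 c, 0 < c &
  forall f, (forall x, 0 <= f x) -> c * f b <= iter k Aop f a.

Lemma RK_refl a : RK 0 a a.
Proof. by exists 1 => // f _; rewrite mul1r. Qed.

Lemma RK_step a b : 0 < K a b -> RK 1 a b.
Proof.
move=> Kab; exists (K a b) => // f f0; rewrite /= /Aop (bigD1 b) //=.
by apply: ler_wpDr => //; apply: sumr_ge0 => x _; apply: mulr_ge0.
Qed.

Lemma RK_trans k1 k2 a b d : RK k1 a b -> RK k2 b d -> RK (k1 + k2) a d.
Proof.
move=> [c1 c10 H1] [c2 c20 H2]; exists (c1 * c2); first exact: mulr_gt0.
move=> f f0; rewrite iterD.
apply: le_trans (H1 _ (@iterA_ge0 k2 f f0)).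
by rewrite -mulrA; apply: ler_wpM2l; [exact: ltW | exact: H2].
Qed.

Arguments RK_step {a b}.
Arguments RK_trans {k1 k2 a b d}.
Hypothesis Kself : forall a, 0 < K a a.

Lemma RK_pad k j a b : RK k a b -> RK (k + j) a b.
Proof.
elim: j => [|j IH]; first by rewrite addn0.
move=> /IH H; have -> : (k + j.+1 = (k + j) + 1)%N by rewrite addnS addn1.
exact: RK_trans H (RK_step (Kself b)).
Qed.

Lemma unif_minor : (forall a b, exists k, RK k a b) ->
  exists n, exists2 d, (0 < d) && (d <= 1) &
   forall f, (forall x, 0 <= f x) -> forall a b, d * f b <= iter n Aop f a.
Proof.
move=> Hr.
have [n Hn] : exists n, forall u : T * T, RK n u.1 u.2.
  apply: (@unif_nat _ (fun u k => RK k u.1 u.2)).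
    by move=> u k j; apply: RK_pad.
  by move=> [a b]; apply: Hr.
have [d d0 Hd] : exists2 d, 0 < d & forall u : T * T,
   forall f, (forall x, 0 <= f x) -> d * f u.2 <= iter n Aop f u.1.
  apply: (@unif_pos _ _ (fun u d => forall f, (forall x, 0 <= f x) ->
      d * f u.2 <= iter n Aop f u.1)).
    move=> u c c' c'0 c'c Hc f f0; apply: le_trans (Hc f f0).
    by apply: ler_wpM2r.
  move=> u; have [c c0 Hc] := Hn u; exists c => //.
exists n; exists (Order.min d 1); first by rewrite lt_min d0 ltr01 ge_min lexx orbT.
move=> f f0 a b; apply: le_trans (Hd (a, b) f f0).
by apply: ler_wpM2r => //; rewrite ge_min lexx.
Qed.


Lemma avg_bounds (g : T -> R) lo hi (z : T) : (forall x, lo <= g x <= hi) -> \sum_a g a = 1 ->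
  lo <= (#|T|%:R)^-1 <= hi.
Proof.
move=> gb gs.
have cpos : (0 < #|T|)%N by apply/card_gt0P; exists z.
have c0 : 0 < (#|T|%:R : R) by rewrite ltr0n.
have H1 : \sum_(a : T) lo <= 1 by rewrite -gs; apply: ler_sum => a _; case/andP: (gb a).
have H2 : 1 <= \sum_(a : T) hi by rewrite -gs; apply: ler_sum => a _; case/andP: (gb a).
rewrite sumr_const -mulr_natr in H1; rewrite sumr_const -mulr_natr in H2.
rewrite -[_^-1]mul1r ler_pdivlMr // ler_pdivrMr //.
by rewrite H1 H2.
Qed.

Section Contr.
Variables (n : nat) (d : R).
Hypotheses (d0 : 0 < d) (d1 : d <= 1).
Hypothesis Hmin : forall f, (forall x, 0 <= f x) -> forall a b, d * f b <= iter n Aop f a.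

Lemma contr f lo hi z : (forall x, lo <= f x <= hi) ->
  forall x, lo + d * (f z - lo) <= iter n Aop f x <= hi - d * (hi - f z).
Proof.
move=> fb x.
have E1 : iter n Aop f = (fun x => lo + 1 * iter n Aop (fun y => f y - lo) x).
  rewrite -iterA_aff; congr (iter _ _ _); apply: funext => y /=; ring.
have E2 : iter n Aop f = (fun x => hi + (-1) * iter n Aop (fun y => hi - f y) x).
  rewrite -iterA_aff; congr (iter _ _ _); apply: funext => y /=; ring.
have g1 : forall y, 0 <= f y - lo by move=> y; rewrite subr_ge0; case/andP: (fb y).
have g2 : forall y, 0 <= hi - f y by move=> y; rewrite subr_ge0; case/andP: (fb y).
have h1 := Hmin _ g1 x z; have h2 := Hmin _ g2 x z.
apply/andP; split.
  by rewrite E1 /=; lra.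
by rewrite E2 /=; lra.
Qed.

Lemma contr_iter (z : T) k f lo hi : (forall x, lo <= f x <= hi) ->
  exists lo', exists hi', (forall x, lo' <= iter (k * n) Aop f x <= hi') /\
     hi' - lo' = (1 - d) ^+ k * (hi - lo).
Proof.
move=> fb; elim: k => [|k [lo' [hi' [Hb Hw]]]].
  by exists lo, hi; split => //; rewrite expr0 mul1r.
exists (lo' + d * (iter (k * n) Aop f z - lo')).
exists (hi' - d * (hi' - iter (k * n) Aop f z)); split.
  by rewrite mulSn iterD; apply: contr.
by rewrite exprS -mulrA -Hw; ring.
Qed.

Lemma small_pow (eps : R) : 0 < eps -> exists k, (1 - d) ^+ k <= eps.
Proof.
move=> e0.
have z1 : `|1 - d| < 1.
  rewrite ger0_norm ?subr_ge0 //. by rewrite ltrBlDr ltrDl.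
have /cvgrPdist_le /(_ eps e0) := cvg_expr z1.
move=> [N _ HN]; exists N; have := HN N (leqnn N).
by rewrite /= sub0r normrN ger0_norm // exprn_ge0 // subr_ge0.
Qed.

Lemma conv_unif (z : T) f : (forall x, 0 <= f x <= 1) -> \sum_a f a = 1 ->
  forall eps : R, 0 < eps -> exists N, forall t, (N <= t)%N ->
    forall a, `|(#|T|%:R)^-1 - iter t Aop f a| <= eps.
Proof.
move=> fb fs eps e0.
have [k Hk] := @small_pow eps e0.
have [lo [hi [Hb Hw]]] := @contr_iter z k f 0 1 fb.
exists (k * n)%N => t Ht a.
have Et : iter t Aop f = iter (t - k * n) Aop (iter (k * n) Aop f).
  by rewrite -iterD subnK.
have Hb' := @iterA_bounds (t - k * n) _ _ _ Hb.
have Hs : \sum_a iter t Aop f a = 1 by rewrite sum_iterA.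
have Hb'' : forall x, lo <= iter t Aop f x <= hi by move=> x; rewrite Et; apply: Hb'.
have /andP[Al Ah] := @avg_bounds _ lo hi z Hb'' Hs.
have /andP[Hl Hh] := Hb'' a.
rewrite subr0 mulr1 in Hw.
rewrite ler_norml; apply/andP; split; lra.
Qed.

Lemma fixed_unique (z : T) (g : T -> R) : (forall a, Aop g a = g a) ->
  (forall x, 0 <= g x <= 1) -> \sum_a g a = 1 -> forall a, g a = (#|T|%:R)^-1.
Proof.
move=> gf gb gs a.
have Hit : forall t, iter t Aop g = g.
  by elim=> [//|t IH]; rewrite iterS IH; apply: funext.
apply/eqP; rewrite -subr_eq0; apply/eqP.
set x := _ - _.
have H : forall eps : R, 0 < eps -> `|x| <= eps.
  move=> eps e0; have [N HN] := @conv_unif z g gb gs eps e0.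
  by have := HN N (leqnn N) a; rewrite Hit distrC.
have [->//|xn0] := eqVneq x 0.
have nx : 0 < `|x| by rewrite normr_gt0.
have := H (`|x| / 2) (divr_gt0 nx (ltr0Sn _ 1)).
lra.
Qed.
End Contr.
End Gen.

Section Conc.
Variables (R : realType) (V : finType) (e : rel V) (M : nat).
Hypothesis eirr : irreflexive e.
Notation C := (config V M).

Lemma config_eq (a b : C) : (forall v, cval a v = cval b v) -> a = b.
Proof. by move=> H; apply/val_inj/ffunP => v; apply/val_inj; exact: H. Qed.

Lemma cval_sum (a : C) : (\sum_v cval a v)%N = M.
Proof. exact: (eqP (svalP a)). Qed.

Lemma le_sum1 (f : V -> nat) v : (f v <= \sum_z f z)%N.
Proof. by rewrite (bigD1 v) //= leq_addr. Qed.

Lemma le_sum2 (f : V -> nat) x y : x != y -> (f x + f y <= \sum_z f z)%N.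
Proof.
move=> xy; rewrite (bigD1 x) //= (bigD1 y) /=; last by rewrite eq_sym.
by rewrite addnA leq_addr.
Qed.

Lemma sum_swap (f g : V -> nat) x y : x != y ->
  (forall z, z != x -> z != y -> f z = g z) -> (f x + f y = g x + g y)%N ->
  (\sum_z f z = \sum_z g z)%N.
Proof.
move=> xy Hfg Hxy.
rewrite (bigD1 x) //= (bigD1 y) /=; last by rewrite eq_sym.
rewrite [RHS](bigD1 x) //= [in RHS](bigD1 y) /=; last by rewrite eq_sym.
rewrite !addnA Hxy; congr (_ + _)%N; apply: eq_bigr => z /andP [zy zx].
exact: Hfg.
Qed.

Definition mkc (c0 : C) (f : V -> nat) : C :=
  insubd c0 [ffun v => (inord (f v) : 'I_M.+1)].

Lemma mkcE c0 f : (\sum_z f z)%N = M -> forall v, cval (mkc c0 f) v = f v.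
Proof.
move=> fs v.
have fle : forall z, (f z <= M)%N by move=> z; rewrite -fs le_sum1.
rewrite /cval /mkc insubdK ?ffunE ?inordK //.
  by rewrite ltnS fle.
rewrite /in_mem /=; apply/eqP; rewrite -[RHS]fs; apply: eq_bigr => z _.
by rewrite ffunE inordK // ltnS fle.
Qed.

Lemma star_proof (v0 : V) :
  (\sum_v ([ffun v => if v == v0 then (ord_max : 'I_M.+1) else ord0] v : nat))%N == M.
Proof.
rewrite (bigD1 v0) //= ffunE eqxx big1 ?addn0 // => v /negbTE.
by rewrite ffunE => ->.
Qed.

Definition star (v0 : V) : C := exist (fun f : {ffun V -> 'I_M.+1} => (\sum_(x : V) (f x : nat))%N == M) _ (star_proof v0).

Lemma starE v0 v : cval (star v0) v = if v == v0 then M else 0%N.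
Proof. by rewrite /cval /= ffunE; case: eqP. Qed.


Definition Ind (a b : C) (x y : V) : bool :=
  [forall v, (v != x) && (v != y) ==> (cval b v == cval a v)] &&
  (cval b x + cval b y == cval a x + cval a y)%N.

Lemma Ind_sym a b x y : Ind a b x y = Ind b a x y.
Proof.
rewrite /Ind; congr andb; last by rewrite eq_sym.
by apply/forallP/forallP => H v; move: (H v); rewrite (eq_sym (cval a v)).
Qed.

Lemma Ind_refl a x y : Ind a a x y.
Proof. by rewrite /Ind eqxx andbT; apply/forallP => v; rewrite eqxx implybT. Qed.

Lemma upd_ind (a b : C) x y u : x != y -> (u <= cval a x + cval a y)%N ->
  [forall v, cval b v == upd (cval a) x y u v] = (u == cval b x) && Ind a b x y.
Proof.
move=> xy us; apply/forallP/andP.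
  move=> H; have Hx := eqP (H x); have Hy := eqP (H y).
  rewrite /upd eqxx in Hx; rewrite /upd eq_sym (negbTE xy) eqxx in Hy.
  split; first by rewrite Hx.
  apply/andP; split.
    apply/forallP => v; apply/implyP => /andP[vx vy]; have := H v.
    by rewrite /upd (negbTE vx) (negbTE vy).
  by rewrite Hx Hy subnKC.
move=> [/eqP -> /andP [/forallP Ho /eqP Hs]] v; rewrite /upd.
case: (eqVneq v x) => [->|vx]; first by [].
case: (eqVneq v y) => [->|vy]; first by rewrite -Hs addKn.
by have := Ho v; rewrite vx vy.
Qed.

Lemma sum_ind (c : R) (bx s : nat) (I : bool) : (I -> (bx <= s)%N) ->
  \sum_(0 <= u < s.+1) c * (if (u == bx) && I then 1 else 0) = if I then c else 0.
Proof.
case: I => H.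
  have bxr : bx \in index_iota 0 s.+1 by rewrite mem_index_iota ltnS H.
  rewrite (bigD1_seq bx bxr (iota_uniq _ _)) /= eqxx mulr1.
  by rewrite big1 ?addr0 // => u /negbTE ->; rewrite mulr0.
by rewrite big1 // => u _; rewrite andbF mulr0.
Qed.

Notation K := (@reshuffle_kernel R V e M).

Lemma K_simpl a b : K a b = (#|edges e|%:R)^-1 *
  \sum_(p in edges e) (if Ind a b p.1 p.2 then ((cval a p.1 + cval a p.2).+1%:R)^-1 else 0).
Proof.
rewrite /reshuffle_kernel; congr (_ * _); apply: eq_bigr => p; rewrite inE => pe.
have xy : p.1 != p.2 by apply: contraTneq pe => ->; rewrite eirr.
transitivity (\sum_(0 <= u < (cval a p.1 + cval a p.2).+1)
   ((cval a p.1 + cval a p.2).+1%:R)^-1 *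
   (if (u == cval b p.1) && Ind a b p.1 p.2 then (1 : R) else 0)).
  apply: eq_big_nat => u /andP[_ us]; rewrite upd_ind // -ltnS.
by apply: sum_ind => /andP[_ /eqP Hs]; rewrite -Hs leq_addr.
Qed.

Lemma K_sym a b : K a b = K b a.
Proof.
rewrite !K_simpl; congr (_ * _); apply: eq_bigr => p _.
rewrite Ind_sym; case: ifP => // /andP[_ /eqP Hs].
by rewrite Hs.
Qed.

Lemma K_ge0 a b : 0 <= K a b.
Proof.
rewrite K_simpl; apply: mulr_ge0; first by rewrite invr_ge0 ler0n.
by apply: sumr_ge0 => p _; case: ifP => // _; rewrite invr_ge0 ler0n.
Qed.

Hypothesis Econn : connected_graph e.
Hypothesis HV : (1 < #|V|)%N.

Lemma E_pos : (0 < #|edges e|)%N.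
Proof.
have [v [w [_ _ vw]]] := card_gt1P HV.
have /connectP [p pp Hl] := Econn v w.
case: p pp Hl => [|x1 p] /=.
  by move=> _ Hl; rewrite Hl eqxx in vw.
by move=> /andP[ev _] _; apply/card_gt0P; exists (v, x1); rewrite inE.
Qed.

Lemma K_pos a b p : p \in edges e -> Ind a b p.1 p.2 -> 0 < K a b.
Proof.
move=> pe H; rewrite K_simpl; apply: mulr_gt0; first by rewrite invr_gt0 ltr0n E_pos.
rewrite (bigD1 p) //= H; apply: ltr_wpDr; last by rewrite invr_gt0 ltr0n.
by apply: sumr_ge0 => q _; case: ifP => // _; rewrite invr_ge0 ler0n.
Qed.

Lemma K_self a : 0 < K a a.
Proof. by have /card_gt0P [p pe] := E_pos; apply: (@K_pos a a p pe); apply: Ind_refl. Qed.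

Lemma K_row a : \sum_b K a b = 1.
Proof.
rewrite /reshuffle_kernel -mulr_sumr exchange_big /=.
rewrite (eq_bigr (fun _ => 1)).
  by rewrite sumr_const; apply: mulVf; rewrite pnatr_eq0 -lt0n E_pos.
move=> p; rewrite inE => pe.
have xy : p.1 != p.2 by apply: contraTneq pe => ->; rewrite eirr.
rewrite exchange_big /=.
set s := (cval a p.1 + cval a p.2)%N.
rewrite (eq_big_nat _ _ (F2 := fun _ => (s.+1%:R)^-1)).
  by rewrite sumr_const_nat subn0 -[LHS]mulr_natr mulVf // pnatr_eq0.
move=> u /andP[_ us]; rewrite ltnS in us.
rewrite -mulr_sumr.
set g := upd (cval a) p.1 p.2 u.
have gs : (\sum_z g z)%N = M.
  rewrite -(cval_sum a); apply: (@sum_swap _ _ p.1 p.2 xy).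
    by move=> z zx zy; rewrite /g /upd (negbTE zx) (negbTE zy).
  by rewrite /g /upd eqxx eq_sym (negbTE xy) eqxx subnKC.
rewrite (bigD1 (mkc a g)) //=.
have -> : [forall v, cval (mkc a g) v == g v].
  by apply/forallP => v; rewrite mkcE.
rewrite big1 ?addr0 ?mulr1 // => b bb0.
case: ifP => // /forallP H; exfalso; move/eqP: bb0; apply.
by apply: config_eq => v; rewrite mkcE //; apply/eqP.
Qed.

Definition Reach (a b : C) := exists k, RK R C K k a b.

Lemma Reach_trans a b d : Reach a b -> Reach b d -> Reach a d.
Proof.
move=> [k1 H1] [k2 H2]; exists (k1 + k2)%N.
exact: (@RK_trans R C K K_ge0 _ _ _ _ _ H1 H2).
Qed.

Lemma Reach_step a b : 0 < K a b -> Reach a b.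
Proof. by move=> H; exists 1%N; exact: (@RK_step R C K K_ge0 a b H). Qed.

Lemma Reach_refl a : Reach a a.
Proof. by exists 0%N; exact: RK_refl. Qed.

Definition tr (a : C) x y : C := mkc a (fun z => if z == x then 0%N
   else if z == y then (cval a y + cval a x)%N else cval a z).

Lemma trE a x y : x != y -> forall z, cval (tr a x y) z =
  if z == x then 0%N else if z == y then (cval a y + cval a x)%N else cval a z.
Proof.
move=> xy; apply: mkcE; rewrite -[RHS](cval_sum a); apply: (@sum_swap _ _ x y xy).
  by move=> z zx zy; rewrite (negbTE zx) (negbTE zy).
by rewrite eqxx [y == x]eq_sym (negbTE xy) eqxx add0n addnC.
Qed.

Lemma tr_reach a x y : e x y -> Reach a (tr a x y) /\ Reach (tr a x y) a.
Proof.
move=> exy.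
have xy : x != y by apply: contraTneq exy => ->; rewrite eirr.
have pe : (x, y) \in edges e by rewrite inE.
have H : Ind a (tr a x y) x y.
  rewrite /Ind; apply/andP; split.
    apply/forallP => v; apply/implyP => /andP[vx vy].
    by rewrite trE // (negbTE vx) (negbTE vy).
  by rewrite !trE // eqxx [y == x]eq_sym (negbTE xy) eqxx add0n addnC.
split; apply: Reach_step; first exact: (@K_pos _ _ _ pe H).
by rewrite K_sym; exact: (@K_pos _ _ _ pe H).
Qed.

Lemma gflow p : forall x (a : C), path e x p -> last x p != x ->
  exists b, (Reach a b /\ Reach b a) /\
    (cval a x + cval a (last x p) <= cval b (last x p))%N.
Proof.
elim: p => [|x1 p IH] x a /=; first by rewrite eqxx.
move=> /andP[ex pp] Hl.
have xx1 : x != x1 by apply: contraTneq ex => ->; rewrite eirr.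
have [R1 R2] := @tr_reach a x x1 ex.
case: (eqVneq (last x1 p) x1) => [Ey|Ny].
  exists (tr a x x1); split => //.
  by rewrite Ey trE // [x1 == x]eq_sym (negbTE xx1) eqxx addnC.
have [b [[R3 R4] Hb]] := IH x1 (tr a x x1) pp Ny.
exists b; split; first by split; [exact: Reach_trans R1 R3 | exact: Reach_trans R4 R2].
move: Hb; rewrite !trE // eqxx [x1 == x]eq_sym (negbTE xx1) (negbTE Hl) (negbTE Ny).
lia.
Qed.

Lemma full_star v0 (a : C) : (M <= cval a v0)%N -> a = star v0.
Proof.
move=> H; apply: config_eq => v; rewrite starE; case: (eqVneq v v0) => [->|vv0].
  by have := le_sum1 (cval a) v0; rewrite cval_sum; lia.
by have := @le_sum2 (cval a) v v0 vv0; rewrite cval_sum; lia.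
Qed.

Lemma gather v0 k : forall a : C, (M - cval a v0 <= k)%N ->
  Reach a (star v0) /\ Reach (star v0) a.
Proof.
elim: k => [|k IH] a Hk.
  by rewrite (@full_star v0 a); [split; apply: Reach_refl | lia].
case: (leqP M (cval a v0)) => HM.
  by rewrite (@full_star v0 a HM); split; apply: Reach_refl.
case/boolP: [exists x, (x != v0) && (0 < cval a x)%N] => [/existsP[x /andP[xv0 xpos]] | /existsPn Hn].
  have /connectP [p pp Hl] := Econn x v0.
  have Hl' : last x p != x by rewrite -Hl eq_sym.
  have [b [[R1 R2] Hb]] := @gflow p x a pp Hl'.
  rewrite -Hl in Hb.
  have bM : (cval b v0 <= M)%N by have := le_sum1 (cval b) v0; rewrite cval_sum.
  have [R3 R4] := IH b (ltac:(lia)).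
  by split; [exact: Reach_trans R1 R3 | exact: Reach_trans R4 R2].
exfalso.
have : (\sum_z cval a z = cval a v0)%N.
  rewrite (bigD1 v0) //= big1 ?addn0 // => z zv0.
  by have := Hn z; rewrite zv0 /= lt0n negbK => /eqP.
rewrite cval_sum; lia.
Qed.

Lemma Reach_all a b : Reach a b.
Proof.
have [v0 _] := card_gt1P HV.
have [H1 _] := @gather v0 M a (leq_subr _ _).
have [_ H2] := @gather v0 M b (leq_subr _ _).
exact: Reach_trans H1 H2.
Qed.

Lemma main :
  exists pi : C -> R,
    [/\ @is_stationary R V e M pi,
        (forall pi' : C -> R, @is_stationary R V e M pi' -> pi' = pi) &
        (forall xi eta : C,
            (fun t : nat => @law_at R V e M t eta xi) @ \oo --> pi xi)].
Proof.
have [v0 _] := card_gt1P HV.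
pose z : C := star v0.
have [n [d /andP[d0 d1] Hmin]] := @unif_minor R C K K_ge0 K_self Reach_all.
have cpos : (0 < #|(C : finType)|)%N by apply/card_gt0P; exists z.
exists (fun _ => (#|(C : finType)|%:R : R)^-1); split.
- split; first by move=> _; rewrite invr_ge0 ler0n.
  split.
    by rewrite sumr_const -[LHS]mulr_natr mulVf // pnatr_eq0 -lt0n.
  move=> xi'; rewrite -mulr_sumr (eq_bigr (fun xi => K xi' xi)) ?K_row ?mulr1 //.
  by move=> xi _; exact: K_sym.
- move=> pi' [p0 [ps pst]]; apply: funext => a.
  apply: (@fixed_unique R C K K_ge0 K_sym K_row n d d0 d1 Hmin z pi') => //.
    move=> b; rewrite /Aop -[RHS]pst; apply: eq_bigr => x _.
    by rewrite mulrC K_sym.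
  move=> x; rewrite p0 /= -ps (bigD1 x) //= lerDl.
  by apply: sumr_ge0 => y _.
- move=> xi eta.
  have Hl : forall t, (fun x => @law_at R V e M t eta x) =
      iter t (Aop R C K) (fun x => @law_at R V e M 0 eta x).
    elim=> [//|t IH]; rewrite iterS -IH; apply: funext => x /=; rewrite /Aop.
    by apply: eq_bigr => y _; rewrite mulrC K_sym.
  apply/cvgrPdist_le => eps e0.
  have f0b : forall x, 0 <= @law_at R V e M 0 eta x <= 1.
    by move=> x /=; case: eqP => _; rewrite ?lexx ?ler01.
  have f0s : \sum_x @law_at R V e M 0 eta x = 1.
    rewrite (bigD1 eta) //= eqxx big1 ?addr0 // => x /negbTE.
    by rewrite eq_sym => ->.
  have [N HN] := @conv_unif R C K K_ge0 K_sym K_row n d d0 d1 Hmin z _ f0b f0s eps e0.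
  exists N => // t Ht; have := HN t Ht xi.
  by rewrite -Hl.
Qed.

End Conc.

Theorem lemma1 (R : realType) (V : finType) (e : rel V) (M : nat) :
  simple_graph e -> connected_graph e -> (1 < #|V|)%N ->
  exists pi : config V M -> R,
    [/\ @is_stationary R V e M pi,
        (forall pi' : config V M -> R, @is_stationary R V e M pi' -> pi' = pi) &
        (forall xi eta : config V M,
            (fun t : nat => @law_at R V e M t eta xi) @ \oo --> pi xi)].
Proof.
move=> [_ eirr] Econn HV.
exact: (@main R V e M eirr Econn HV).
Qed.
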